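(* Let $u,v$ be positive integers with $uv\equiv 0\pmod{12}$ and $v\equiv 0\pmod 6$. Then $\Phi(u\times v,4,2)\le\left\lfloor\frac{u}{4}\left(\left\lfloor\frac{uv-1}{3}\left\lfloor\frac{uv-2}{2}\right\rfloor\right\rfloor-2\right)\right\rfloor$.
   Context: A 2-D $(u\times v,4,2)$-OOC is a family $\mathcal C$ of $u\times v$ $(0,1)$-matrices of Hamming weight $4$ such that for all $A=(a_{ij}),B=(b_{ij})\in\mathcal C$ and integers $r$ with $A\ne B$ or $r\not\equiv0\pmod v$, $\sum_{i,j}a_{ij}b_{i,j+r}\le 2$ (column indices mod $v$). $\Phi(u\times v,4,2)$ is the largest size of such a code. *)

(* Defs.v *)
From mathcomp Require Import all_boot.
Set Implicit Arguments. Unset Strict Implicit. Unset Printing Implicit Defensive.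

Definition bmat (u v : nat) := {ffun 'I_u * 'I_v -> bool}.

Definition hweight u v (A : bmat u v) : nat := #|[set p | A p]|.

(* Cyclic cross-correlation  sum_{i,j} a_{ij} b_{i, j+r mod v}  (for 0/1
   entries this is the number of (i,j) with a_{ij} = b_{i,(j+r) mod v} = 1). *)
Definition ccorr u v (A B : bmat u v) (r : nat) : nat :=
  #|[set p : 'I_u * 'I_v * 'I_v |
      [&& A (p.1.1, p.1.2), B (p.1.1, p.2) & (p.2 == (p.1.2 + r) %% v :> nat)]]|.

(* C is a 2-D (u x v, 4, 2)-OOC.  Shifts r range over integers mod v,
   represented by r in {0,..,v-1}. *)
Definition is_OOC_4_2 u v (C : {set bmat u v}) : Prop :=
  (forall A, A \in C -> hweight A = 4) /\
  (forall A B, A \in C -> B \in C -> forall r : 'I_v,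
     (A != B) || (r != 0 :> nat) -> ccorr A B r <= 2).

(* Main.v *)
Require Import Defs.
From mathcomp Require Import all_boot all_algebra zify.
Set Implicit Arguments. Unset Strict Implicit. Unset Printing Implicit Defensive.
Import GRing.Theory.

Lemma card_sum (T : finType) (Pr : pred T) : #|[set x | Pr x]| = \sum_x (Pr x : nat).
Proof. by rewrite -sum1_card big_mkcond /=; apply: eq_bigr => x _; rewrite inE; case: (Pr x). Qed.

Lemma inv_even (T : finType) (f : T -> T) (S : {set T}) :
  (forall x, f (f x) = x) -> (forall x, f x != x) ->
  (forall x, x \in S -> f x \in S) -> ~~ odd #|S|.
Proof.
move=> ff fx fS; move: {2}#|S| (leqnn #|S|) => k; elim: k S fS => [|k IH] S fS.
  by rewrite leqn0 => /eqP->.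
case: (set_0Vmem S) => [->|[a aS]]; first by rewrite cards0.
move=> hk.
have faS : f a \in S :\ a by rewrite !inE fx fS.
have e : #|S| = (#|S :\ a :\ f a|).+2.
  by rewrite (cardsD1 a S) aS (cardsD1 (f a) (S :\ a)) faS.
rewrite e /= negbK.
apply: (IH); last by move: hk; rewrite e; lia.
move=> y; rewrite !inE => /and3P[h1 h2 h3]; rewrite fS // andbT.
apply/andP; split.
- by apply: contra h2 => /eqP e1; rewrite -(ff y) e1 ff.
- by apply: contra h1 => /eqP e1; rewrite -e1 ff.
Qed.

Section Main.
Variables (u n : nat).
Local Notation V := n.+1.
Local Notation P := ('I_u * 'I_V)%type.
Variable C : {set bmat u V}.
Hypothesis HC : is_OOC_4_2 C.

Definition blk := (bmat u V * 'I_V)%type.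
Definition inb (b : blk) (p : P) : bool := b.1 (p.1, (p.2 - b.2)%R).
Definition sh (r : 'I_V) (p : P) : P := (p.1, (p.2 + r)%R).

Lemma eqZp (a b c : 'I_V) : ((b : nat) == ((a : nat) + (c : nat)) %% V) = (b == a + c)%R.
Proof. by []. Qed.

Lemma ccorr_tr (A B : bmat u V) (r1 r2 : 'I_V) :
  ccorr A B (r1 - r2)%R = #|[set p | inb (A, r1) p && inb (B, r2) p]|.
Proof.
rewrite /ccorr.
pose psi := fun p : P => ((p.1, (p.2 - r1)%R), (p.2 - r2)%R).
have ipsi : injective psi.
  move=> [i j] [i' j'] e.
  have e1 := congr1 (fun q => q.1.1) e; have e3 := congr1 snd e.
  simpl in e1, e3; rewrite e1 (addIr _ e3) //.
rewrite -(card_imset _ ipsi); apply: eq_card => [[[i j] k]].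
rewrite inE; apply/idP/imsetP.
- move=> /and3P[hA hB]; rewrite eqZp => /eqP /= hk; simpl in hA, hB.
  exists (i, (k + r2)%R).
    by rewrite inE /inb /= !addrK hB andbT hk addrA subrK addrK hA.
  by rewrite /psi /= addrK hk addrA subrK addrK.
- move=> [[p1 p2]]; rewrite inE /inb /= => /andP[hA hB] [-> -> ->].
  apply/and3P; split; [exact: hA | exact: hB | ].
  change (nat_of_ord (p2 - r2)%R == (nat_of_ord (p2 - r1)%R + nat_of_ord (r1 - r2)%R) %% V).
  by rewrite eqZp subrKA.
Qed.

Lemma card_sum2 (T : finType) (A : {set T}) (f : pred T) :
  #|[set w in A | f w]| = \sum_(w in A) (f w : nat).
Proof.
rewrite -sum1_card big_mkcond [RHS]big_mkcond; apply: eq_bigr => w _.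
by rewrite !inE; case: (w \in A); case: (f w).
Qed.

Lemma inb_card (b : blk) : b.1 \in C -> #|[set p | inb b p]| = 4.
Proof.
move=> hb; rewrite -(HC.1 _ hb) /hweight.
pose f := fun p : P => (p.1, (p.2 - b.2)%R).
have finj : injective f.
  move=> [i j] [i' j'] e.
  have e1 := congr1 fst e; have e2 := congr1 snd e.
  simpl in e1, e2; by rewrite e1 (addIr _ e2).
rewrite -[RHS](card_preimset _ finj); apply: eq_card => p; by rewrite !inE /inb /f /=.
Qed.

Lemma Kb (b1 b2 : blk) : b1.1 \in C -> b2.1 \in C -> b1 != b2 ->
  #|[set p | inb b1 p && inb b2 p]| <= 2.
Proof.
case: b1 b2 => [A r1] [B r2] /= hA hB hne.
rewrite -ccorr_tr; apply: (HC.2 _ _ hA hB).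
move: hne; rewrite xpair_eqE negb_and => /orP[->//|h]; apply/orP; right.
apply: contra h => /eqP h0; rewrite -subr_eq0; apply/eqP; exact: val_inj.
Qed.

Lemma K3 (b1 b2 : blk) (a b c : P) : b1.1 \in C -> b2.1 \in C ->
  a != b -> a != c -> b != c ->
  inb b1 a -> inb b1 b -> inb b1 c -> inb b2 a -> inb b2 b -> inb b2 c -> b1 = b2.
Proof.
move=> h1 h2 hab hac hbc h1a h1b h1c h2a h2b h2c.
apply/eqP; apply/negPn/negP => hne.
have := Kb h1 h2 hne.
have sub : a |: [set b; c] \subset [set p | inb b1 p && inb b2 p].
  apply/subsetP => z; rewrite !inE => /orP[|/orP[]] /eqP ->; apply/andP; split => //.
have := subset_leq_card sub.
rewrite cardsU1 cards2 !inE negb_or hab hac hbc /=.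
lia.
Qed.

Lemma inb_sh (b : blk) r p : inb (b.1, (b.2 + r)%R) (sh r p) = inb b p.
Proof. by rewrite /inb /sh /= (addrC b.2) addrKA. Qed.

Lemma sh_inj r : injective (sh r).
Proof.
move=> [i j] [i' j'] e.
have e1 := congr1 fst e; have e2 := congr1 snd e.
simpl in e1, e2; by rewrite e1 (addIr _ e2).
Qed.

Lemma sh_sh r r' p : sh r (sh r' p) = sh (r' + r)%R p.
Proof. by rewrite /sh /= addrA. Qed.

Lemma sh0 p : sh 0%R p = p.
Proof. by case: p => i j; rewrite /sh /= addr0. Qed.

Definition uncov (a b c : P) :=
  ~~ [exists bl : blk, [&& bl.1 \in C, inb bl a, inb bl b & inb bl c]].

Lemma uncov_sh r a b c : uncov a b c -> uncov (sh r a) (sh r b) (sh r c).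
Proof.
apply: contra => /existsP [[A q] /and4P[hC h1 h2 h3]].
apply/existsP; exists (A, (q - r)%R).
by rewrite /= hC -(inb_sh (A, (q - r)%R) r a) -(inb_sh (A, (q - r)%R) r b)
  -(inb_sh (A, (q - r)%R) r c) /= subrK h1 h2 h3.
Qed.

Lemma uncov12 a b c : uncov a b c -> uncov b a c.
Proof.
rewrite /uncov; apply: contra => /existsP[bl h]; apply/existsP; exists bl.
by move: h; case: (bl.1 \in C); case: (inb bl a); case: (inb bl b); case: (inb bl c).
Qed.

Lemma uncov23 a b c : uncov a b c -> uncov a c b.
Proof.
rewrite /uncov; apply: contra => /existsP[bl h]; apply/existsP; exists bl.
by move: h; case: (bl.1 \in C); case: (inb bl a); case: (inb bl b); case: (inb bl c).
Qed.

Definition Bx (x : P) := [set b : blk | (b.1 \in C) && inb b x].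
Definition lam (x z : P) := #|[set b : blk | [&& b.1 \in C, inb b x & inb b z]]|.
Definition unc (x z : P) := #|[set w : P | [&& w != x, w != z & uncov x z w]]|.

Lemma E1 x z : z != x -> lam x z + lam x z + unc x z = #|[set: P]| - 2.
Proof.
move=> hzx.
set W := [set w : P | (w != x) && (w != z)].
have cW : #|[set: P]| = (#|W|).+2.
  rewrite (cardsD1 x [set: P]) in_setT (cardsD1 z) !inE hzx /=.
  congr (_.+2); apply: eq_card => y; rewrite !inE andbT andbC //.
set cov := fun w => [exists b : blk, [&& b.1 \in C, inb b x, inb b z & inb b w]].
have hW : #|W| = #|[set w in W | cov w]| + unc x z.
  rewrite -(cardsID [set w | cov w] W); congr (_ + _).
    by apply: eq_card => w; rewrite !inE.
  by apply: eq_card => w; rewrite !inE /uncov /cov andbC -andbA.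
set Bz := [set b : blk | [&& b.1 \in C, inb b x & inb b z]].
have S1 : \sum_(b in Bz) \sum_(w in W) (inb b w : nat) = (lam x z) * 2.
  rewrite /lam -/Bz -sum_nat_const; apply: eq_bigr => b.
  rewrite inE => /and3P[hC hx hz].
  rewrite -card_sum2.
  have c4 := inb_card hC.
  rewrite (cardsD1 x) inE hx (cardsD1 z) !inE hz hzx /= in c4.
  have -> : [set w in W | inb b w] = [set p | inb b p] :\ x :\ z.
    apply/setP => w; rewrite !inE; by case: (w == x); case: (w == z); case: (inb b w).
  by apply/eqP; rewrite -(eqn_add2l 2); apply/eqP; exact: c4.
have S2 : \sum_(w in W) \sum_(b in Bz) (inb b w : nat) = #|[set w in W | cov w]|.
  rewrite card_sum2; apply: eq_bigr => w; rewrite inE => /andP[hwx hwz].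
  case hc: (cov w).
    case/existsP: hc => b0 /and4P[h0C h0x h0z h0w].
    rewrite (bigD1 b0) /=; last by rewrite inE h0C h0x h0z.
    rewrite h0w big1 // => b /andP[]; rewrite inE => /and3P[hC hbx hbz] hne.
    case hbw: (inb b w) => //.
    by rewrite (K3 hC h0C _ _ _ hbx hbz hbw h0x h0z h0w) ?eqxx in hne; rewrite // eq_sym.
  rewrite big1 // => b; rewrite inE => /and3P[hC hbx hbz].
  case hbw: (inb b w) => //.
  move/negbT: hc => /existsPn /(_ b); by rewrite hC hbx hbz hbw.
rewrite exchange_big S1 in S2.
lia.
Qed.

Lemma E2 x : \sum_(z in [set z | z != x]) lam x z = 3 * #|Bx x|.
Proof.
have -> : \sum_(z in [set z | z != x]) lam x z =
    \sum_(z in [set z | z != x]) \sum_(b in Bx x) (inb b z : nat).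
  apply: eq_bigr => z _; rewrite /lam -card_sum2; apply: eq_card => b.
  by rewrite !inE andbA.
rewrite exchange_big mulnC -sum_nat_const; apply: eq_bigr => b.
rewrite inE => /andP[hC hx].
rewrite -card_sum2.
have c4 := inb_card hC.
rewrite (cardsD1 x) inE hx in c4.
have -> : [set w in [set z | z != x] | inb b w] = [set p | inb b p] :\ x.
  apply/setP => w; rewrite !inE; by case: (w == x); case: (inb b w).
by apply/eqP; rewrite -(eqn_add2l 1); apply/eqP; exact: c4.
Qed.

Lemma row_eq x : 6 * #|Bx x| + \sum_(z in [set z | z != x]) unc x z =
  (#|[set: P]| - 1) * (#|[set: P]| - 2).
Proof.
have cQ : #|[set z : P | z != x]| = #|[set: P]| - 1.
  rewrite (cardsD1 x [set: P]) in_setT add1n subSS subn0; apply: eq_card => y.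
  by rewrite !inE andbT.
have : \sum_(z in [set z | z != x]) (lam x z + lam x z + unc x z) =
     \sum_(z in [set z | z != x]) (#|[set: P]| - 2).
  by apply: eq_bigr => z; rewrite inE => hz; rewrite E1.
rewrite !big_split /= E2 sum_nat_const cQ => <-; congr (_ + _); by rewrite -mulnDl.
Qed.

Lemma unc_even x z : #|[set: P]| %% 2 = 0 -> z != x -> unc x z %% 2 = 0.
Proof. move=> hN /E1 h; lia. Qed.

Lemma sum_ge x (F : {set P}) : #|[set: P]| %% 2 = 0 -> x \notin F ->
  (forall z, z \in F -> 0 < unc x z) ->
  2 * #|F| <= \sum_(z in [set z | z != x]) unc x z.
Proof.
move=> hN hxF hF.
rewrite (bigID (mem F)) /=; apply: leq_trans (leq_addr _ _).
rewrite (eq_bigl (mem F)); last first.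
  move=> z /=; rewrite inE; case hz: (z \in F); rewrite ?andbF ?andbT //.
  by apply: contraNneq hxF => <-.
rewrite mulnC -sum_nat_const; apply: leq_sum => z hz.
have := hF z hz; have := unc_even hN (_ : z != x).
have hzx : z != x by apply: contraNneq hxF => <-.
move/(_ hzx); lia.
Qed.

Lemma pos_unc x z w : w != x -> w != z -> uncov x z w -> 0 < unc x z.
Proof. by move=> h1 h2 h3; apply/card_gt0P; exists w; rewrite inE h1 h2 h3. Qed.

Variable sn : nat.
Hypothesis hsn : V = 6 * sn.

Definition s0 : 'I_V := inord sn.
Definition o k : 'I_V := (s0 *+ k)%R.

Lemma val_mulrn (a : 'I_V) k : nat_of_ord (a *+ k)%R = (k * a) %% V.
Proof.
elim: k => [|k IH]; first by rewrite mulr0n mul0n mod0n.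
rewrite mulrS.
change (((a : nat) + nat_of_ord (a *+ k)%R) %% V = k.+1 * a %% V).
by rewrite IH modnDmr mulSn.
Qed.

Lemma val_o k : k < 6 -> nat_of_ord (o k) = k * sn.
Proof.
move=> hk; rewrite /o val_mulrn /s0 inordK; last by lia.
rewrite modn_small //; nia.
Qed.

Lemma o6 : o 6 = 0%R.
Proof.
apply: val_inj; change (nat_of_ord (o 6) = 0).
rewrite /o val_mulrn /s0 inordK; last by lia.
by rewrite -hsn modnn.
Qed.

Lemma oD i j : (o i + o j)%R = o (i + j).
Proof. by rewrite /o mulrnDr. Qed.

Lemma o_neq i j : i < 6 -> j < 6 -> i != j -> o i != o j.
Proof.
move=> hi hj hij; apply/negP => /eqP /(congr1 val).
change (nat_of_ord (o i) = nat_of_ord (o j) -> False).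
rewrite !val_o //; move: hij => /eqP; nia.
Qed.

Variable i0 : 'I_u.
Definition pt (a : 'I_V) : P := (i0, a).

Lemma pt_eq a b : (pt a == pt b) = (a == b).
Proof. by rewrite /pt xpair_eqE eqxx. Qed.

Lemma sh_pt r a : sh r (pt a) = pt (a + r)%R.
Proof. by []. Qed.

Lemma o0 : o 0 = 0%R.
Proof. by rewrite /o mulr0n. Qed.

Lemma o6' : o 6 = o 0.
Proof. by rewrite o6 o0. Qed.

Lemma ptneq i j : i < 6 -> j < 6 -> i != j -> pt (o i) != pt (o j).
Proof. by move=> hi hj hij; rewrite pt_eq o_neq. Qed.

Lemma shift_neq (b : blk) r : r != 0%R -> (b.1, (b.2 + r)%R) != b.
Proof.
case: b => A q /= hr; rewrite xpair_eqE eqxx /=; apply: contra hr => /eqP h.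
by apply/eqP; rewrite -(addKr q r) h addNr.
Qed.

Lemma card5 (T : finType) (a b c d e : T) :
  a != b -> a != c -> a != d -> a != e -> b != c -> b != d -> b != e ->
  c != d -> c != e -> d != e -> #|a |: (b |: (c |: [set d; e]))| = 5.
Proof.
move=> ab ac ad ae bc bd be cd ce de.
by rewrite !cardsU1 cards1 !inE !negb_or ab ac ad ae bc bd be cd ce de.
Qed.

Local Notation x0 := (pt (o 0)).

Lemma unc2 : uncov x0 (pt (o 2)) (pt (o 4)).
Proof.
rewrite /uncov; apply/negP => /existsP[b /and4P[hC h0 h2 h4]].
set b' := (b.1, (b.2 + o 2)%R).
have e2 : pt (o 2) = sh (o 2) x0 by rewrite sh_pt oD.
have e4 : pt (o 4) = sh (o 2) (pt (o 2)) by rewrite sh_pt oD.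
have e0 : x0 = sh (o 2) (pt (o 4)) by rewrite sh_pt oD -o6'.
have h2' : inb b' (pt (o 2)) by rewrite e2 inb_sh.
have h4' : inb b' (pt (o 4)) by rewrite e4 inb_sh.
have h0' : inb b' x0 by rewrite e0 inb_sh.
have := @K3 b b' _ _ _ hC hC (ptneq _ _ _) (ptneq _ _ _) (ptneq _ _ _) h0 h2 h4 h0' h2' h4'.
move/(_ isT isT isT isT isT isT isT isT isT) => eb.
have := shift_neq b (o_neq (i:=2) (j:=0) isT isT isT).
by rewrite -/b' -eb eqxx.
Qed.

Lemma h2pos : 0 < unc x0 (pt (o 2)).
Proof. apply: (pos_unc (w := pt (o 4))); [exact: ptneq | exact: ptneq | exact: unc2]. Qed.

Lemma h4pos : 0 < unc x0 (pt (o 4)).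
Proof. apply: (pos_unc (w := pt (o 2))); [exact: ptneq | exact: ptneq | exact: uncov23 unc2]. Qed.

Lemma sh_neq (p : P) r : r != 0%R -> sh r p != p.
Proof.
case: p => i j hr; rewrite /sh xpair_eqE eqxx /=; apply: contra hr => /eqP h.
by apply/eqP; rewrite -(addKr j r) h addNr.
Qed.

Lemma ex3 : x0 = sh (o 3) (pt (o 3)).
Proof. by rewrite sh_pt oD -o6'. Qed.

Lemma e3 : pt (o 3) = sh (o 3) x0.
Proof. by rewrite sh_pt oD. Qed.

Lemma h3pos : #|[set: P]| %% 4 = 0 -> 0 < unc x0 (pt (o 3)).
Proof.
move=> hN.
have hz : pt (o 3) != x0 by exact: ptneq.
have E := E1 hz.
have ev : ~~ odd (lam x0 (pt (o 3))).
  rewrite /lam; apply: (inv_even (f := fun b : blk => (b.1, (b.2 + o 3)%R))).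
  - by move=> [A q] /=; rewrite -addrA oD o6 addr0.
  - move=> b; apply: shift_neq; exact: (o_neq (i:=3) (j:=0)).
  - move=> b; rewrite !inE => /and3P[hC hx h3]; rewrite /= hC /=.
    by rewrite ex3 inb_sh h3 /= e3 inb_sh hx.
have ev2 : lam x0 (pt (o 3)) %% 2 = 0 by rewrite modn2; move: ev; case: odd.
pose N := #|[set: P]|.
have E' : lam x0 (pt (o 3)) + lam x0 (pt (o 3)) + unc x0 (pt (o 3)) = N - 2 := E.
have hN' : N %% 4 = 0 := hN.
have hNp : 0 < N by apply/card_gt0P; exists x0; rewrite in_setT.
clear E hN; lia.
Qed.

Lemma neg_sym a b : (a + b)%R = 0%R -> 0 < unc x0 (pt a) -> 0 < unc x0 (pt b).
Proof.
move=> hab /card_gt0P[w]; rewrite inE => /and3P[hwx hwa hu].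
have := uncov_sh b hu; rewrite !sh_pt hab o0 add0r -o0 => /uncov12 hu'.
apply: (pos_unc (w := sh b w)) => //.
- apply: contra hwa => /eqP h; apply/eqP; apply: (sh_inj (r:=b)).
  by rewrite h sh_pt hab o0.
- apply: contra hwx => /eqP h; apply/eqP; apply: (sh_inj (r:=b)).
  by rewrite h sh_pt o0 add0r.
Qed.

Lemma o7 : o 7 = o 1.
Proof. by rewrite -[7]/(1 + 6) -oD o6 addr0. Qed.

Lemma E3 : #|[set: P]| %% 4 = 0 -> 10 <= \sum_(z in [set z | z != x0]) unc x0 z.
Proof.
move=> hN; have hN2 : #|[set: P]| %% 2 = 0 by lia.
have h3 := h3pos hN.
have caseB : 0 < unc x0 (pt (o 1)) -> 10 <= \sum_(z in [set z | z != x0]) unc x0 z.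
  move=> h1.
  have h5 : 0 < unc x0 (pt (o 5)).
    by apply: (neg_sym (a := o 1)) => //; rewrite oD o6.
  apply: leq_trans (sum_ge (F := pt (o 1) |: (pt (o 2) |: (pt (o 3) |: [set pt (o 4); pt (o 5)]))) hN2 _ _).
  - rewrite card5 //; apply: ptneq => //.
  - rewrite !inE !negb_or; repeat (apply/andP; split); by apply: ptneq.
  - move=> z; rewrite !inE => /orP[|/orP[|/orP[|/orP[]]]] /eqP ->.
    + exact: h1.
    + exact: h2pos.
    + exact: h3.
    + exact: h4pos.
    + exact: h5.
case/card_gt0P: (h3) => p; rewrite inE => /and3P[hpx hp3 hu].
set q := sh (o 3) p.
have huq : uncov x0 (pt (o 3)) q.
  by have := uncov_sh (o 3) hu; rewrite -ex3 -e3 => /uncov12.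
have hp : 0 < unc x0 p.
  apply: (pos_unc (w := pt (o 3))); [exact: ptneq | by rewrite eq_sym | exact: uncov23 hu].
have hqx : q != x0.
  apply: contra hp3 => /eqP h; apply/eqP; apply: (sh_inj (r := o 3)).
  by rewrite -/q h -ex3.
have hq3 : q != pt (o 3).
  apply: contra hpx => /eqP h; apply/eqP; apply: (sh_inj (r := o 3)).
  by rewrite -/q h e3.
have hq : 0 < unc x0 q.
  apply: (pos_unc (w := pt (o 3))); [exact: ptneq | by rewrite eq_sym | exact: uncov23 huq].
have qq : sh (o 3) q = p by rewrite /q sh_sh oD o6 sh0.
have key : forall r, 0 < unc x0 r -> 0 < unc x0 (sh (o 3) r) ->
    (r == pt (o 2)) || (r == pt (o 4)) -> 10 <= \sum_(z in [set z | z != x0]) unc x0 z.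
  move=> r hr hsr /orP[] /eqP er; rewrite er sh_pt oD in hsr.
  - apply: caseB; apply: (neg_sym (a := o 5)) => //; by rewrite oD o6.
  - by rewrite o7 in hsr; apply: caseB.
case: (boolP ((p == pt (o 2)) || (p == pt (o 4)))) => hp24.
  exact: key p hp hq hp24.
case: (boolP ((q == pt (o 2)) || (q == pt (o 4)))) => hq24.
  by apply: (key q hq _ hq24); rewrite qq.
move: hp24 hq24; rewrite !negb_or => /andP[hp2 hp4] /andP[hq2 hq4].
have hpq : p != q by rewrite eq_sym sh_neq //; exact: (o_neq (i:=3) (j:=0)).
apply: leq_trans (sum_ge (F := pt (o 2) |: (pt (o 3) |: (p |: [set pt (o 4); q]))) hN2 _ _).
- rewrite card5 // ?ptneq // 1?eq_sym //.
- rewrite !inE !negb_or; repeat (apply/andP; split) => //; rewrite 1?eq_sym //; exact: ptneq.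
- move=> z; rewrite !inE => /orP[|/orP[|/orP[|/orP[]]]] /eqP ->.
  + exact: h2pos.
  + exact: h3.
  + exact: hp.
  + exact: h4pos.
  + exact: hq.
Qed.

End Main.

Lemma arith N D S : N %% 12 = 0 -> 0 < N -> 6 * D + S = (N - 1) * (N - 2) -> 10 <= S ->
  D <= ((N - 1) * ((N - 2) %/ 2)) %/ 3 - 2.
Proof.
move=> h12 hN hE hS.
have [k hk] : exists k, N = 12 * k.+1.
  exists (N %/ 12).-1; lia.
subst N.
have e2 : (12 * k.+1 - 2) %/ 2 = 6 * k.+1 - 1 by lia.
rewrite e2.
pose y := 24 * k.+1 * k.+1 - 6 * k.+1.
have e3 : (12 * k.+1 - 1) * (6 * k.+1 - 1) = 3 * y + 1 by rewrite /y; nia.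
have e4 : (12 * k.+1 - 1) * (12 * k.+1 - 2) = 6 * y + 2 by rewrite /y; nia.
rewrite e3; rewrite e4 in hE.
have -> : (3 * y + 1) %/ 3 = y by lia.
lia.
Qed.

Lemma sum_rows u n (C : {set bmat u n.+1}) : is_OOC_4_2 C ->
  \sum_(i : 'I_u) #|Bx C (i, 0%R)| = 4 * #|C|.
Proof.
move=> HC.
have -> : \sum_(i : 'I_u) #|Bx C (i, 0%R)| =
   \sum_(i : 'I_u) \sum_(b : blk u n) ((b.1 \in C) && b.1 (i, (0 - b.2)%R) : nat).
  by apply: eq_bigr => i _; rewrite /Bx card_sum.
rewrite exchange_big /=.
rewrite -(pair_bigA _ (fun A r => \sum_(i : 'I_u) ((A \in C) && A (i, (0 - r)%R) : nat))) /=.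
rewrite (eq_bigr (fun A => if A \in C then 4 else 0)); last first.
  move=> A _; case hA: (A \in C); last by rewrite big1 // => r _; rewrite big1.
  rewrite /=.
  rewrite (reindex_inj (h := fun r : 'I_n.+1 => (0 - r)%R) (@subrI _ 0%R)) /=.
  under eq_bigr => r _ do under eq_bigr => i _ do rewrite subKr.
  rewrite exchange_big pair_bigA /= -(proj1 HC A hA) /hweight card_sum.
  by apply: eq_bigr => [[i j]].
by rewrite -big_mkcond sum_nat_const mulnC.
Qed.

Theorem lemma5p3 (u v : nat) (C : {set bmat u v}) :
  0 < u -> 0 < v -> u * v %% 12 = 0 -> v %% 6 = 0 ->
  is_OOC_4_2 C ->
  #|C| <= (u * (((u * v - 1) * ((u * v - 2) %/ 2)) %/ 3 - 2)) %/ 4.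
Proof.
move: C; case: v => [|n] C hu hv huv hv6 HC; first by [].
have hsn : n.+1 = 6 * (n.+1 %/ 6) by lia.
have hNc : #|[set: 'I_u * 'I_n.+1]| = u * n.+1 by rewrite cardsT card_prod !card_ord.
have hN4 : #|[set: 'I_u * 'I_n.+1]| %% 4 = 0 by rewrite hNc; lia.
rewrite leq_divRL // mulnC -sum_rows //.
rewrite -[X in _ <= X * _]card_ord -sum_nat_const; apply: leq_sum => i _.
have e0 : (i, 0%R) = pt i (o n (n.+1 %/ 6) 0) by rewrite /pt o0.
rewrite e0; apply: (arith (S := \sum_(z in [set z0 | z0 != pt i (o n (n.+1 %/ 6) 0)])
   unc C (pt i (o n (n.+1 %/ 6) 0)) z)) => //.
- lia.
- by rewrite -hNc (row_eq HC).
- exact: (E3 HC hsn i hN4).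
Qed.
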